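(* Let $\Sigma=(X,\mathcal{S},\phi)$ be a forward complete dynamical system. Let $t_1>0$, $G_0>0$, and let $\beta$ be a function of class $\mathcal{K}_\infty$ such that $\limsup_{r\downarrow 0}\frac{\beta(r)}{r}<+\infty$ and $$\|\phi(t,x,\sigma)\|\le G_0\,\beta(\|x\|)\quad \text{for all } t\in[0,t_1],\ x\in X,\ \sigma\in\mathcal{S}.$$ Then: (i) If there exist $R>0$, a functional $V:B_X(0,R)\to\mathbb{R}_+$ and $p,c>0$ such that for every $x\in B_X(0,R)$ and $\sigma\in\mathcal{S}$, $$V(x)\le c\|x\|^p,\qquad \underline{D}_\sigma V(x)\le -\|x\|^p,$$ and such that, for every $x\in B_X(0,R)$ and $\sigma\in\mathcal{S}$, the map $t\mapsto V(\phi(t,x,\sigma))$ is continuous from the left at every $t>0$ such that $\phi(t,x,\sigma)\in B_X(0,R)$, then $\Sigma$ is ULES. (ii) If for every $R>0$ there exist $V_R:B_X(0,R)\to\mathbb{R}_+$, $p_R>0$, $c_R>0$ satisfying all the hypotheses of (i) with $V=V_R$, $p=p_R$, $c=c_R$, and moreover $$\limsup_{R\to+\infty}\beta^{-1}\!\left(\frac{R}{G_0}\right)\min\left\{1,\left(\frac{t_1}{c_R}\right)^{1/p_R}\right\}=+\infty,$$ then $\Sigma$ is USGES. (iii) If $\beta$ is the identity function and there exist $p,c>0$ and a functional $V:X\to\mathbb{R}_+$ such that for every $x\in X$ and $\sigma\in\mathcal{S}$ the map $t\mapsto V(\phi(t,x,\sigma))$ is continuous from the left, $V(x)\le c\|x\|^p$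 and $\underline{D}_\sigma V(x)\le-\|x\|^p$, then $\Sigma$ is UGES.
   Context: $(X,\|\cdot\|)$ is a Banach space and $B_X(x,r)$ is the closed ball of center $x$ and radius $r$. A function $\alpha:\mathbb{R}_+\to\mathbb{R}_+$ is of class $\mathcal{K}_\infty$ if it is continuous, increasing, unbounded and $\alpha(0)=0$. Let $\mathcal{Q}$ be a nonempty set and $\mathcal{S}$ a set of functions $\sigma:\mathbb{R}_+\to\mathcal{Q}$ closed by time-shift (for $\sigma\in\mathcal{S}$, $\tau\ge0$, $\mathbb{T}_\tau\sigma:s\mapsto\sigma(\tau+s)$ is in $\mathcal{S}$) and by concatenation (for $\sigma_1,\sigma_2\in\mathcal{S}$, $\tau>0$, the function equal to $\sigma_1$ on $[0,\tau]$ and with $\sigma(\tau+t)=\sigma_2(t)$ for $t>0$ is in $\mathcal{S}$). A triple $\Sigma=(X,\mathcal{S},\phi)$ with $\phi:\mathbb{R}_+\times X\times\mathcal{S}\to X$ is a forward complete dynamical system if: $\phi(0,x,\sigma)=x$; $\phi(t,x,\tilde\sigma)=\phi(t,x,\sigma)$ whenever $\tilde\sigma=\sigma$ on $[0,t]$; $t\mapsto\phi(t,x,\sigma)$ is continuous; $\phi(\tau,\phi(t,x,\sigma),\mathbb{T}_t\sigma)=\phi(t+\tau,x,\sigma)$ for all $t,\tau\ge0$. The lower Dini derivative of $V$ along $\Sigma$ is $\underline{D}_\sigma V(x)=\liminf_{h\downarrow0}\frac1h\big(V(\phi(h,x,\sigma))-V(x)\big)$. $\Sigma$ is ULES if there exist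 $R,M,\lambda>0$ with $\|\phi(t,x,\sigma)\|\le Me^{-\lambda t}\|x\|$ for all $t\ge0$, $x\in B_X(0,R)$, $\sigma\in\mathcal{S}$; USGES if for every $r>0$ there exist $M(r),\lambda(r)>0$ with $\|\phi(t,x,\sigma)\|\le M(r)e^{-\lambda(r)t}\|x\|$ for all $t\ge0$, $x\in B_X(0,r)$, $\sigma\in\mathcal{S}$; UGES if there exist $M,\lambda>0$ with $\|\phi(t,x,\sigma)\|\le Me^{-\lambda t}\|x\|$ for all $t\ge0$, $x\in X$, $\sigma\in\mathcal{S}$. *)

(* Defs.v *)
From HB Require Import structures.
From mathcomp Require Import all_boot all_order all_algebra.
From mathcomp Require Import all_classical all_reals all_analysis.
Set Implicit Arguments. Unset Strict Implicit. Unset Printing Implicit Defensive.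
Import Order.TTheory GRing.Theory Num.Theory.
Import numFieldNormedType.Exports.
Local Open Scope classical_set_scope.
Local Open Scope ring_scope.

Section Defs.
Variables (R : realType) (X : normedModType R) (Q : Type).

(* Signals sigma : R_+ -> Q are represented as functions R -> Q; only
   their values on [0, +oo) matter (causality below). *)
Definition tshift (tau : R) (sigma : R -> Q) : R -> Q := fun s => sigma (tau + s).
Definition concat (sigma1 sigma2 : R -> Q) (tau : R) : R -> Q :=
  fun t => if t <= tau then sigma1 t else sigma2 (t - tau).

Definition signal_set (S : set (R -> Q)) : Prop :=
  [/\ S !=set0,
      (forall sigma tau, S sigma -> 0 <= tau -> S (tshift tau sigma)) &
      (forall sigma1 sigma2 tau, S sigma1 -> S sigma2 -> 0 < tau ->
         S (concat sigma1 sigma2 tau))].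

Definition fwd_complete (S : set (R -> Q)) (phi : R -> X -> (R -> Q) -> X) : Prop :=
  [/\ (forall x sigma, S sigma -> phi 0 x sigma = x),
      (forall t x sigma sigma', S sigma -> S sigma' -> 0 <= t ->
         (forall s, 0 <= s <= t -> sigma' s = sigma s) ->
         phi t x sigma' = phi t x sigma),
      (forall x sigma, S sigma ->
         {within [set t | 0 <= t], continuous (fun t => phi t x sigma)}) &
      (forall t tau x sigma, S sigma -> 0 <= t -> 0 <= tau ->
         phi tau (phi t x sigma) (tshift t sigma) = phi (t + tau) x sigma)].

Definition cball (r : R) : set X := [set x | `|x| <= r].

Definition classKinf (beta : R -> R) : Prop :=
  [/\ {within [set r | 0 <= r], continuous beta},
      (forall r s, 0 <= r -> r < s -> beta r < beta s),
      (forall M, exists r, 0 <= r /\ M < beta r) &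
      beta 0 = 0].

Definition Kinv (beta : R -> R) (y : R) : R :=
  xget 0 [set r | 0 <= r /\ beta r = y].

Definition limsup_0right (f : R -> R) : \bar R :=
  ereal_inf [set ereal_sup [set (f r)%:E | r in [set r | 0 < r < d]]
            | d in [set d | 0 < d]].

Definition limsup_pinfty (f : R -> R) : \bar R :=
  ereal_inf [set ereal_sup [set (f r)%:E | r in [set r | r0 <= r /\ 0 < r]]
            | r0 in [set: R]].

(* lower Dini derivative of V along the system, for V defined on D:
   liminf_{h -> 0+} (V(phi(h,x,sigma)) - V(x))/h, the liminf being taken
   over those h for which phi(h,x,sigma) lies in the domain D of V. *)
Definition dini_lower (phi : R -> X -> (R -> Q) -> X) (D : set X) (V : X -> R)
    (x : X) (sigma : R -> Q) : \bar R :=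
  ereal_sup [set ereal_inf [set ((V (phi h x sigma) - V x) / h)%:E
                           | h in [set h | 0 < h < d /\ D (phi h x sigma)]]
            | d in [set d | 0 < d]].

(* Lyapunov hypotheses on a domain D (D = B_X(0,R) in (i),(ii); D = X in (iii)) *)
Definition lyap_hyp (S : set (R -> Q)) (phi : R -> X -> (R -> Q) -> X)
    (D : set X) (V : X -> R) (p c : R) : Prop :=
  [/\ 0 < p, 0 < c,
      (forall x, D x -> 0 <= V x),
      (forall x sigma, D x -> S sigma ->
         V x <= c * (`|x| `^ p) /\
         (dini_lower phi D V x sigma <= (- (`|x| `^ p))%:E)%E) &
      (forall x sigma, D x -> S sigma -> forall t, 0 < t -> D (phi t x sigma) ->
         forall eps, 0 < eps -> exists2 del, 0 < del &
           forall s, t - del < s <= t -> D (phi s x sigma) ->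
             `|V (phi s x sigma) - V (phi t x sigma)| < eps)].

Definition ULES (S : set (R -> Q)) (phi : R -> X -> (R -> Q) -> X) : Prop :=
  exists r M lam, [/\ 0 < r, 0 < M, 0 < lam &
    forall t x sigma, 0 <= t -> `|x| <= r -> S sigma ->
      `|phi t x sigma| <= M * expR (- (lam * t)) * `|x|].

Definition USGES (S : set (R -> Q)) (phi : R -> X -> (R -> Q) -> X) : Prop :=
  forall r, 0 < r -> exists M lam, [/\ 0 < M, 0 < lam &
    forall t x sigma, 0 <= t -> `|x| <= r -> S sigma ->
      `|phi t x sigma| <= M * expR (- (lam * t)) * `|x|].

Definition UGES (S : set (R -> Q)) (phi : R -> X -> (R -> Q) -> X) : Prop :=
  exists M lam, [/\ 0 < M, 0 < lam &
    forall t x sigma, 0 <= t -> S sigma ->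
      `|phi t x sigma| <= M * expR (- (lam * t)) * `|x|].

End Defs.

(* Main.v *)
Require Import Defs.
From HB Require Import structures.
From mathcomp Require Import all_boot all_order all_algebra.
From mathcomp Require Import all_classical all_reals all_analysis.
From mathcomp Require Import ring lra.
Import Order.TTheory GRing.Theory Num.Theory.
Import numFieldNormedType.Exports.
Local Open Scope classical_set_scope.
Local Open Scope ring_scope.
Lemma mono_lemma (R : realType) (w : R -> R) (m a b : R) :
  a <= b ->
  (forall t, a < t <= b -> forall e, 0 < e -> exists2 del, 0 < del &
      forall s, t - del < s <= t -> a <= s -> `|w s - w t| < e) ->
  (forall t, a <= t < b -> forall d, 0 < d -> exists h,
      [/\ 0 < h, h < d & w (t+h) + m*(t+h) <= w t + m*t]) ->
  w b + m * b <= w a + m * a.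
Proof.
move=> ab lc dn.
pose g := fun t => w t + m*t.
pose A := [set t | a <= t <= b /\ g t <= g a].
have Aa : A a by split; [rewrite lexx ab | rewrite lexx].
have A0 : A !=set0 by exists a.
have hA : has_sup A by split => //; exists b => t [/andP[_ ->]].
pose s := sup A.
have as_ : a <= s := sup_upper_bound hA Aa.
have sb : s <= b by apply: ge_sup => // t [/andP[_ ->]].
have gs : g s <= g a.
  move: as_; rewrite le_eqVlt => /orP[/eqP <-|as_]; first by rewrite lexx.
  apply/ler_addgt0Pr => e e0.
  have e20 : 0 < e / 2 by rewrite divr_gt0.
  have [del del0 Hdel] := lc s ltac:(by rewrite as_ sb) (e/2) e20.
  have m1 : 0 < 1 + `|m| by rewrite ltr_pwDl.
  pose eps := Num.min del (e / 2 / (1 + `|m|)).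
  have eps0 : 0 < eps by rewrite lt_min del0 divr_gt0.
  have [t At ht] := sup_adherent eps0 hA; rewrite -/s in ht.
  have ts : t <= s := sup_upper_bound hA At.
  case: At => /andP[at_ tb] gt.
  have epsd : eps <= del by rewrite ge_min lexx.
  have h1 := Hdel t ltac:(rewrite ts andbT; lra) at_.
  have epse : eps * (1 + `|m|) <= e / 2.
    by rewrite -ler_pdivlMr // ge_min lexx orbT.
  have h2 : m * s - m * t <= e / 2.
    rewrite -mulrBr; apply: le_trans (ler_norm _) _.
    rewrite normrM (ger0_norm (x := s - t)) ?subr_ge0 //.
    apply: le_trans epse.
    have : s - t <= eps by lra.
    move=> st; rewrite mulrC; apply: ler_pM => //; first by rewrite subr_ge0.
    lra.
  move/ltr_distlCDr: h1 => h1.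
  rewrite /g in gt *; lra.
have sbE : s = b.
  apply/eqP; rewrite eq_le sb /=; rewrite leNgt; apply/negP => sb'.
  have [h [h0 hd gh]] := dn s ltac:(by rewrite as_ sb') (b - s) ltac:(by rewrite subr_gt0).
  have : A (s + h).
    split; last by rewrite /g; apply: le_trans gs; rewrite /g in gh.
    apply/andP; split; lra.
  move/(sup_upper_bound hA); rewrite -/s; lra.
by rewrite -sbE.
Qed.
Lemma dini_step (R : realType) (X : normedModType R) (Q : Type)
  (S : set (R -> Q)) (phi : R -> X -> (R -> Q) -> X) (D : set X) (V : X -> R)
  (p c : R) x sigma t m d :
  signal_set S -> fwd_complete S phi -> lyap_hyp S phi D V p c ->
  S sigma -> 0 <= t -> D (phi t x sigma) -> m < `|phi t x sigma| `^ p -> 0 < d ->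
  exists h, [/\ 0 < h, h < d &
    V (phi (t+h) x sigma) + m*(t+h) <= V (phi t x sigma) + m*t].
Proof.
move=> [_ shift _] [_ _ _ semi] [_ _ _ hV _] Ss t0 Dy my d0.
set y := phi t x sigma in Dy my *.
have Ss' := shift _ _ Ss t0.
have H := (hV y (tshift t sigma) Dy Ss').2.
set E := [set ((V (phi h y (tshift t sigma)) - V y) / h)%:E
           | h in [set h | 0 < h < d /\ D (phi h y (tshift t sigma))]].
have H1 : (ereal_inf E <= (- `|y| `^ p)%:E)%E.
  apply: le_trans H; apply: ereal_sup_ubound; exists d => //.
have H2 : (ereal_inf E < (- m)%:E)%E.
  by apply: le_lt_trans H1 _; rewrite lte_fin ltrN2.
have [z [h [/andP[h0 hd] _] <-]] := ereal_inf_lt H2.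
rewrite lte_fin => hz.
exists h; split => //.
have -> : phi (t + h) x sigma = phi h y (tshift t sigma).
  by rewrite semi // ltW.
move: hz; rewrite ltr_pdivrMr // => hz.
have : V (phi h y (tshift t sigma)) - V y < - (m * h) by rewrite -mulNr.
rewrite mulrDr; lra.
Qed.

Lemma decr (R : realType) (X : normedModType R) (Q : Type)
  (S : set (R -> Q)) (phi : R -> X -> (R -> Q) -> X) (D : set X) (V : X -> R)
  (p c : R) x sigma a b m :
  signal_set S -> fwd_complete S phi -> lyap_hyp S phi D V p c ->
  S sigma -> D x -> 0 <= a -> a <= b ->
  (forall t, a <= t <= b -> D (phi t x sigma)) ->
  (forall t, a <= t < b -> m < `|phi t x sigma| `^ p) ->
  V (phi b x sigma) + m * b <= V (phi a x sigma) + m * a.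
Proof.
move=> sS fS lH Ss Dx a0 ab Dt mt.
apply: (@mono_lemma R (fun t => V (phi t x sigma))) => //.
- move=> t /andP[at_ tb] e e0.
  have t0 : 0 < t by apply: le_lt_trans at_.
  case: lH => _ _ _ _ lcV.
  have [del del0 Hd] := lcV x sigma Dx Ss t t0 (Dt t ltac:(by rewrite (ltW at_) tb)) e e0.
  exists del => // s /andP[s1 s2] as_.
  apply: Hd; first by rewrite s1 s2.
  apply: Dt; rewrite as_ /=; apply: le_trans s2 tb.
- move=> t /andP[at_ tb] d d0.
  apply: (@dini_step R X Q S phi D V p c x sigma t m d sS fS lH Ss) => //.
  + exact: le_trans at_.
  + by apply: Dt; rewrite at_ ltW.
  + by apply: mt; rewrite at_ tb.
Qed.

Lemma nonincr (R : realType) (X : normedModType R) (Q : Type)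
  (S : set (R -> Q)) (phi : R -> X -> (R -> Q) -> X) (D : set X) (V : X -> R)
  (p c : R) x sigma a b :
  signal_set S -> fwd_complete S phi -> lyap_hyp S phi D V p c ->
  S sigma -> D x -> 0 <= a -> a <= b ->
  (forall t, a <= t <= b -> D (phi t x sigma)) ->
  V (phi b x sigma) <= V (phi a x sigma).
Proof.
move=> sS fS lH Ss Dx a0 ab Dt.
apply/ler_addgt0Pr => e e0.
have ba1 : 0 < b - a + 1 by lra.
pose k := e / (b - a + 1).
have k0 : 0 < k by rewrite divr_gt0.
have mt : forall t, a <= t < b -> - k < `|phi t x sigma| `^ p.
  by move=> t _; apply: lt_le_trans (powR_ge0 _ _); rewrite oppr_lt0.
have H := @decr R X Q S phi D V p c x sigma a b (- k) sS fS lH Ss Dx a0 ab Dt mt.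
have kba : k * (b - a) <= e.
  rewrite /k mulrC mulrA ler_pdivrMr //; nra.
rewrite mulrBr in kba; nra.
Qed.

Lemma hit (R : realType) (X : normedModType R) (Q : Type)
  (S : set (R -> Q)) (phi : R -> X -> (R -> Q) -> X) (D : set X) (V : X -> R)
  (p c : R) x sigma a b e :
  signal_set S -> fwd_complete S phi -> lyap_hyp S phi D V p c ->
  S sigma -> D x -> 0 <= a -> a <= b -> 0 <= e ->
  (forall t, 0 <= t <= b -> D (phi t x sigma)) ->
  c * `|x| `^ p < (b - a) * e `^ p ->
  exists2 s, a <= s <= b & `|phi s x sigma| <= e.
Proof.
move=> sS fS lH Ss Dx a0 ab e0 Dt hc.
case: (pselect (exists2 s, a <= s <= b & `|phi s x sigma| <= e)) => // Hn.
exfalso.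
have Hs : forall s, a <= s <= b -> e < `|phi s x sigma|.
  move=> s hs; rewrite ltNge; apply/negP => hle; apply: Hn; exists s => //.
have p0 : 0 < p by case: lH.
have mt : forall t, a <= t < b -> e `^ p < `|phi t x sigma| `^ p.
  move=> t /andP[h1 h2]; apply: gt0_ltr_powR => //; rewrite ?nnegrE //.
  by apply: Hs; rewrite h1 ltW.
have Dab : forall t, a <= t <= b -> D (phi t x sigma).
  by move=> t /andP[h1 h2]; apply: Dt; rewrite h2 (le_trans a0 h1).
have H1 := @decr R X Q S phi D V p c x sigma a b (e `^ p) sS fS lH Ss Dx a0 ab Dab mt.
have D0a : forall t, 0 <= t <= a -> D (phi t x sigma).
  by move=> t /andP[h1 h2]; apply: Dt; rewrite h1 (le_trans h2 ab).
have H2 := @nonincr R X Q S phi D V p c x sigma 0 a sS fS lH Ss Dx (lexx 0) a0 D0a.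
have [phi0 _ _ _] := fS.
rewrite phi0 // in H2.
have [_ _ Vge0 hV _] := lH.
have H3 := (hV x sigma Dx Ss).1.
have H4 := Vge0 _ (Dt b ltac:(by rewrite lexx (le_trans a0 ab))).
rewrite mulrBl in hc.
rewrite [e `^ p * b]mulrC [e `^ p * a]mulrC in H1.
lra.
Qed.

Lemma iterC (R : realType) (X : normedModType R) (Q : Type)
  (S : set (R -> Q)) (phi : R -> X -> (R -> Q) -> X) (rho A tau : R) :
  signal_set S -> fwd_complete S phi -> 0 < tau -> 0 <= A ->
  (forall x sigma t, `|x| <= rho -> S sigma -> 0 <= t <= 2 * tau ->
      `|phi t x sigma| <= A * `|x|) ->
  (forall x sigma, `|x| <= rho -> S sigma ->
      exists2 s, tau <= s <= 2 * tau & `|phi s x sigma| <= `|x| / 2) ->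
  forall x sigma t, `|x| <= rho -> S sigma -> 0 <= t ->
   `|phi t x sigma| <= 2 * A * expR (- (ln 2 / (2 * tau) * t)) * `|x|.
Proof.
move=> [_ shift _] [_ _ _ semi] tau0 A0 H1 H2.
have P : forall k : nat, forall x sigma t (m : nat), `|x| <= rho -> S sigma ->
    0 <= t < tau * k.+1%:R -> 2 * tau * m%:R <= t ->
    `|phi t x sigma| * 2 ^+ m <= A * `|x|.
  elim=> [|k IH] x sigma t m xr Ss /andP[t0 tk] mt.
  - have m0 : m = 0%N.
      case: m mt => // m; rewrite mulr1n mulr1 in tk => mt.
      have : 2 * tau <= 2 * tau * m.+1%:R.
        by rewrite ler_peMr ?mulr_ge0 // ?ler1n // ltW.
      move/le_trans/(_ mt) => hh; exfalso; clear mt; lra.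
    rewrite m0 expr0 mulr1; apply: H1 => //.
    rewrite t0 /=; rewrite mulr1n mulr1 in tk; lra.
  - have [s /andP[s1 s2] hs] := H2 x sigma xr Ss.
    case: (Order.TotalTheory.ltP t s) => ts.
    + have m0 : m = 0%N.
        case: m mt => // m mt.
        have : 2 * tau <= 2 * tau * m.+1%:R.
          by rewrite ler_peMr ?mulr_ge0 // ?ler1n // ltW.
        move/le_trans/(_ mt) => hh; exfalso; clear mt; lra.
      rewrite m0 expr0 mulr1; apply: H1 => //.
      rewrite t0 /=; lra.
    + have s0 : 0 <= s by lra.
      have -> : phi t x sigma = phi (t - s) (phi s x sigma) (tshift s sigma).
        by rewrite semi // ?subr_ge0 // addrC subrK.
      have Ss' := shift _ _ Ss s0.
      have xn : 0 <= `|x| by [].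
      have yr : `|phi s x sigma| <= rho by lra.
      have tk' : 0 <= t - s < tau * k.+1%:R.
        apply/andP; split; first by rewrite subr_ge0.
        move: tk; rewrite -[k.+2%:R]natr1 mulrDr mulr1.
        move: (tau * _) => K; lra.
      case: m mt => [|m] mt.
      * have := IH _ _ (t - s) 0%N yr Ss' tk' ltac:(by rewrite mulr0 subr_ge0).
        rewrite !expr0 !mulr1 => h; apply: le_trans h _.
        apply: ler_wpM2l => //; lra.
      * have mt' : 2 * tau * m%:R <= t - s.
          move: mt; rewrite -[m.+1%:R]natr1 mulrDr mulr1.
          move: (2 * tau * _) => K; lra.
        have := IH _ _ (t - s) m yr Ss' tk' mt'.
        rewrite exprS => h.
        have h' : A * `|phi s x sigma| <= A * (`|x| / 2) by apply: ler_wpM2l.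
        set u := `|phi (t - s) _ _| in h *.
        have : u * 2 ^+ m * 2 <= A * `|x| by move: (u * 2 ^+ m) h => U h; lra.
        by rewrite -mulrA [2 ^+ m * 2]mulrC.
move=> x sigma t xr Ss t0.
pose k := Num.Def.trunc (t / tau).
pose m := Num.Def.trunc (t / (2 * tau)).
have tk : 0 <= t < tau * k.+1%:R.
  rewrite t0 /=; have := truncnS_gt (t / tau); rewrite -/k ltr_pdivrMr //.
  by rewrite mulrC.
have mt : 2 * tau * m%:R <= t.
  have h : (m%:R <= t / (2 * tau)) by rewrite /m truncn_le divr_ge0 // mulr_ge0 // ltW.
  by move: h; rewrite ler_pdivlMr ?mulr_gt0 // mulrC.
have Hm := P k x sigma t m xr Ss tk mt.
have t2 : t / (2 * tau) < m.+1%:R by exact: truncnS_gt.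
have l20 : 0 < ln (2 : R) by rewrite ln_gt0 // ltr1n.
have E : 1 <= 2 * expR (- (ln 2 / (2 * tau) * t)) * 2 ^+ m.
  set L := ln (2 : R) in l20 *.
  have e2 : (2 : R) = expR L by rewrite /L lnK // posrE.
  have e2m : (2 : R) ^+ m = expR (m%:R * L) by rewrite expRM_natl -e2.
  rewrite e2m {1}e2 -!expRD.
  apply: le_trans (expR_ge1Dx _); rewrite lerDl.
  have : L / (2 * tau) * t <= L * m.+1%:R.
    rewrite mulrAC -mulrA; apply: ler_wpM2l; [exact: ltW | exact: ltW].
  rewrite -[m.+1%:R]natr1 mulrDr mulr1 [L * m%:R]mulrC.
  move: (L / (2 * tau) * t) (m%:R * L) => a b; lra.
have nphi : 0 <= `|phi t x sigma| by [].
apply: le_trans (_ : `|phi t x sigma| * (2 * expR (- (ln 2 / (2 * tau) * t)) * 2 ^+ m) <= _).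
  by rewrite ler_peMr.
have e0 : 0 <= 2 * expR (- (ln 2 / (2 * tau) * t)) by rewrite mulr_ge0 // ltW // expR_gt0.
set e := expR _ in e0 *.
have -> : `|phi t x sigma| * (2 * e * 2 ^+ m) = (`|phi t x sigma| * 2 ^+ m) * (2 * e) by ring.
have -> : 2 * A * e * `|x| = (A * `|x|) * (2 * e) by ring.
by apply: ler_wpM2r.
Qed.

Lemma iterE (R : realType) (X : normedModType R) (Q : Type)
  (S : set (R -> Q)) (phi : R -> X -> (R -> Q) -> X) (t1 L del : R) :
  signal_set S -> fwd_complete S phi -> 0 < t1 -> 1 <= L ->
  (forall y sigma t, `|y| < del -> S sigma -> 0 <= t <= t1 ->
      `|phi t y sigma| <= L * `|y|) ->
  forall n : nat, forall x sigma t, L ^+ n * `|x| < del -> S sigma ->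
    0 <= t <= t1 * n%:R -> `|phi t x sigma| <= L ^+ n * `|x|.
Proof.
move=> [_ shift _] [phi0 _ _ semi] t10 L1 H.
have L0 : 0 <= L by apply: le_trans L1.
elim=> [|n IH] x sigma t xd Ss /andP[t0 tn].
  have -> : t = 0 by rewrite mulr0 in tn; apply/eqP; rewrite eq_le tn t0.
  by rewrite phi0 // expr0 mul1r.
have Ln : 1 <= L ^+ n by apply: exprn_ege1.
have LSn : L <= L ^+ n.+1 by rewrite exprS ler_peMr.
have xn : 0 <= `|x| by [].
have xd' : `|x| < del.
  apply: le_lt_trans xd; rewrite ler_peMl //; exact: exprn_ege1.
case: (Order.TotalTheory.leP t t1) => tt1.
  apply: le_trans (H x sigma t xd' Ss ltac:(by rewrite t0 tt1)) _.
  by apply: ler_wpM2r.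
have -> : phi t x sigma = phi (t - t1) (phi t1 x sigma) (tshift t1 sigma).
  by rewrite semi ?subr_ge0 ?(ltW t10) ?(ltW tt1) // addrC subrK.
have hy := H x sigma t1 xd' Ss ltac:(by rewrite lexx (ltW t10)).
have Ln0 : 0 <= L ^+ n by apply: le_trans Ln.
have hy' : L ^+ n * `|phi t1 x sigma| <= L ^+ n.+1 * `|x|.
  apply: le_trans (ler_wpM2l Ln0 hy) _; rewrite exprS (_ : L ^+ n * (L * `|x|) = L * L ^+ n * `|x|) //; ring.
apply: le_trans (hy').
apply: IH.
- exact: le_lt_trans hy' xd.
- exact: shift _ _ Ss (ltW t10).
- apply/andP; split; first by rewrite subr_ge0 ltW.
  move: tn; rewrite -[n.+1%:R]natr1 mulrDr mulr1; move: (t1 * n%:R) => K; lra.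
Qed.

Lemma coreI (R : realType) (X : normedModType R) (Q : Type)
  (S : set (R -> Q)) (phi : R -> X -> (R -> Q) -> X) (D : set X) (V : X -> R)
  (p c t1 L del tau rho : R) (n : nat) :
  signal_set S -> fwd_complete S phi -> lyap_hyp S phi D V p c ->
  0 < t1 -> 1 <= L ->
  (forall y sigma t, `|y| < del -> S sigma -> 0 <= t <= t1 ->
      `|phi t y sigma| <= L * `|y|) ->
  0 < tau -> 2 * tau <= t1 * n%:R -> c < tau * (2^-1) `^ p ->
  L ^+ n * rho < del -> (forall y, `|y| <= L ^+ n * rho -> D y) ->
  forall x sigma t, `|x| <= rho -> S sigma -> 0 <= t ->
   `|phi t x sigma| <= 2 * L ^+ n * expR (- (ln 2 / (2 * tau) * t)) * `|x|.
Proof.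
move=> sS fS lH t10 L1 Hb tau0 taun ctau hd hD.
have Ln : 1 <= L ^+ n by apply: exprn_ege1.
have Ln0 : 0 <= L ^+ n by apply: le_trans Ln.
have H1 : forall x sigma t, `|x| <= rho -> S sigma -> 0 <= t <= 2 * tau ->
      `|phi t x sigma| <= L ^+ n * `|x|.
  move=> x sigma t xr Ss /andP[t0 t2].
  apply: (@iterE R X Q S phi t1 L del sS fS t10 L1 Hb n x sigma t) => //.
    by apply: le_lt_trans hd; apply: ler_wpM2l.
  by rewrite t0 (le_trans t2 taun).
apply: (@iterC R X Q S phi rho (L ^+ n) tau sS fS tau0 Ln0 H1).
move=> x sigma xr Ss.
have [x0|xpos] := eqVneq `|x| 0.
  exists tau; first by rewrite lexx /=; lra.
  have := H1 x sigma tau xr Ss ltac:(by rewrite (ltW tau0) /=; lra).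
  by rewrite x0 mulr0 mul0r.
have xpos' : 0 < `|x| by rewrite lt_def xpos /=.
have p0 : 0 < p by case: lH.
have Dx : D x.
  by apply: hD; apply: le_trans (xr) _; rewrite ler_peMl // (le_trans _ xr).
apply: (@hit R X Q S phi D V p c x sigma tau (2 * tau) (`|x| / 2) sS fS lH Ss Dx) => //.
- exact: ltW.
- lra.
- move=> t /andP[t0 t2]; apply: hD.
  apply: le_trans (H1 x sigma t xr Ss ltac:(by rewrite t0 t2)) _.
  exact: ler_wpM2l.
- rewrite powRM // ?invr_ge0 //.
  have xp0 : 0 < `|x| `^ p by apply: powR_gt0.
  have -> : (2 * tau - tau) * (`|x| `^ p * 2^-1 `^ p) = `|x| `^ p * (tau * 2^-1 `^ p) by ring.
  by rewrite mulrC ltr_pM2l.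
Qed.

Lemma lin_beta (R : realType) (beta : R -> R) :
  classKinf beta ->
  (limsup_0right (fun r => (beta r / r)%R) < +oo)%E ->
  exists del K, 0 < del /\ forall r, 0 <= r < del -> beta r <= K * r.
Proof.
move=> [_ _ _ b0] /ereal_inf_lt [y [d /= d0 <-]] hy.
have E0 : ([set ((beta r / r)%:E) | r in [set r | 0 < r < d]] (beta (d/2) / (d/2))%:E).
  by exists (d/2) => //=; apply/andP; split; lra.
have := ereal_sup_ubound E0.
case Hs: (ereal_sup _) hy => [K| |] // _ hK.
exists d, K; split => // r /andP[r0 rd].
have [->|rpos] := eqVneq r 0; first by rewrite b0 mulr0.
have rp : 0 < r by rewrite lt_def rpos r0.
have : ((beta r / r)%:E <= K%:E)%E.
  rewrite -Hs; apply: ereal_sup_ubound; exists r => //=; by rewrite rp rd.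
by rewrite lee_fin ler_pdivrMr.
Qed.

Lemma partI (R : realType) (X : normedModType R) (Q : Type)
    (S : set (R -> Q)) (phi : R -> X -> (R -> Q) -> X)
    (t1 G0 : R) (beta : R -> R) :
  signal_set S -> fwd_complete S phi ->
  0 < t1 -> 0 < G0 -> classKinf beta ->
  (limsup_0right (fun r => (beta r / r)%R) < +oo)%E ->
  (forall t x sigma, 0 <= t <= t1 -> S sigma ->
     `|phi t x sigma| <= G0 * beta `|x|) ->
  (exists r (V : X -> R) p c, 0 < r /\ lyap_hyp S phi (@cball R X r) V p c) ->
     ULES S phi.
Proof.
move=> sS fS t10 G00 bK blim hb [r [V [p [c [r0 lH]]]]].
have [del [K [del0 HK]]] := @lin_beta R beta bK blim.
pose L := Num.max 1 (G0 * K).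
have L1 : 1 <= L by rewrite le_max lexx.
have Hb : forall y sigma t, `|y| < del -> S sigma -> 0 <= t <= t1 ->
      `|phi t y sigma| <= L * `|y|.
  move=> y sigma t yd Ss tt.
  apply: le_trans (hb t y sigma tt Ss) _.
  have := HK `|y| ltac:(by rewrite normr_ge0 yd).
  move=> h; apply: le_trans (ler_wpM2l (ltW G00) h) _.
  rewrite mulrA; apply: ler_wpM2r => //; by rewrite le_max lexx orbT.
have c0 : 0 < c by case: lH.
have h20 : 0 < (2^-1 : R) `^ p by apply: powR_gt0; rewrite invr_gt0.
pose tau := c / (2^-1 : R) `^ p + 1.
have tau0 : 0 < tau by rewrite /tau; apply: ltr_wpDl; [rewrite divr_ge0 // ltW|].
have ctau : c < tau * (2^-1) `^ p.
  by rewrite /tau mulrDl divfK ?gt_eqF // mul1r ltrDl.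
pose n := (Num.Def.trunc (2 * tau / t1)).+1.
have taun : 2 * tau <= t1 * n%:R.
  have h := truncnS_gt (2 * tau / t1); rewrite ltr_pdivrMr // in h.
  rewrite [t1 * _]mulrC; exact: ltW h.
have Ln : 1 <= L ^+ n by apply: exprn_ege1.
have Ln0 : 0 < L ^+ n by apply: lt_le_trans Ln.
pose rho := Num.min r (del / 2) / L ^+ n.
have m0 : 0 < Num.min r (del / 2) by rewrite lt_min r0 divr_gt0.
have rho0 : 0 < rho by rewrite divr_gt0.
have Lrho : L ^+ n * rho = Num.min r (del / 2) by rewrite /rho mulrC divfK // gt_eqF.
have hd : L ^+ n * rho < del.
  rewrite Lrho; apply: le_lt_trans (_ : _ <= del / 2) _; first by rewrite ge_min lexx orbT.
  by clear -del0; lra.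
have hD : forall y, `|y| <= L ^+ n * rho -> @cball R X r y.
  move=> y; rewrite Lrho /cball /= => h; apply: le_trans h _; by rewrite ge_min lexx.
exists rho, (2 * L ^+ n), (ln 2 / (2 * tau)); split => //.
- by rewrite mulr_gt0.
- by rewrite divr_gt0 ?mulr_gt0 // ln_gt0 // ltr1n.
- move=> t x sigma t0 xr Ss.
  exact: (@coreI R X Q S phi (@cball R X r) V p c t1 L del tau rho n sS fS lH t10 L1 Hb tau0 taun ctau hd hD x sigma t xr Ss t0).
Qed.

Lemma partIII (R : realType) (X : normedModType R) (Q : Type)
    (S : set (R -> Q)) (phi : R -> X -> (R -> Q) -> X)
    (t1 G0 : R) (beta : R -> R) :
  signal_set S -> fwd_complete S phi ->
  0 < t1 -> 0 < G0 ->
  (forall t x sigma, 0 <= t <= t1 -> S sigma ->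
     `|phi t x sigma| <= G0 * beta `|x|) ->
  (forall r, 0 <= r -> beta r = r) ->
  (exists (V : X -> R) p c, lyap_hyp S phi [set: X] V p c) ->
     UGES S phi.
Proof.
move=> sS fS t10 G00 hb bid [V [p [c lH]]].
pose L := Num.max 1 G0.
have L1 : 1 <= L by rewrite le_max lexx.
have Hb : forall del y sigma t, `|y| < del -> S sigma -> 0 <= t <= t1 ->
      `|phi t y sigma| <= L * `|y|.
  move=> del y sigma t yd Ss tt.
  apply: le_trans (hb t y sigma tt Ss) _.
  rewrite bid //; apply: ler_wpM2r => //; by rewrite le_max lexx orbT.
have c0 : 0 < c by case: lH.
have h20 : 0 < (2^-1 : R) `^ p by apply: powR_gt0; rewrite invr_gt0.
pose tau := c / (2^-1 : R) `^ p + 1.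
have tau0 : 0 < tau by rewrite /tau; apply: ltr_wpDl; [rewrite divr_ge0 // ltW|].
have ctau : c < tau * (2^-1) `^ p.
  by rewrite /tau mulrDl divfK ?gt_eqF // mul1r ltrDl.
pose n := (Num.Def.trunc (2 * tau / t1)).+1.
have taun : 2 * tau <= t1 * n%:R.
  have h := truncnS_gt (2 * tau / t1); rewrite ltr_pdivrMr // in h.
  rewrite [t1 * _]mulrC; exact: ltW h.
have Ln : 1 <= L ^+ n by apply: exprn_ege1.
have Ln0 : 0 < L ^+ n by apply: lt_le_trans Ln.
exists (2 * L ^+ n), (ln 2 / (2 * tau)); split => //.
- by rewrite mulr_gt0.
- by rewrite divr_gt0 ?mulr_gt0 // ln_gt0 // ltr1n.
- move=> t x sigma t0 Ss.
  have hd : L ^+ n * `|x| < L ^+ n * `|x| + 1 by rewrite ltrDl.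
  exact: (@coreI R X Q S phi [set: X] V p c t1 L (L ^+ n * `|x| + 1) tau `|x| n sS fS lH t10 L1
     (Hb (L ^+ n * `|x| + 1)) tau0 taun ctau hd (fun _ _ => I) x sigma t (lexx _) Ss t0).
Qed.

Lemma stay (R : realType) (X : normedModType R) (Q : Type)
  (S : set (R -> Q)) (phi : R -> X -> (R -> Q) -> X) (V : X -> R)
  (p c t1 Rb rho : R) :
  signal_set S -> fwd_complete S phi -> lyap_hyp S phi (@cball R X Rb) V p c ->
  0 < t1 ->
  (forall y sigma u, `|y| <= rho -> S sigma -> 0 <= u <= t1 -> `|phi u y sigma| <= Rb) ->
  forall x sigma, `|x| <= rho -> c * `|x| `^ p < t1 * rho `^ p -> S sigma ->
  forall t, 0 <= t -> `|phi t x sigma| <= Rb.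
Proof.
move=> sS fS lH t10 Hr x sigma xr hc Ss.
have [_ shift _] := sS.
have [phi0 _ _ semi] := fS.
have [p0 c0 _ _ _] := lH.
set a := c * `|x| `^ p in hc.
set q := rho `^ p in hc.
have a0 : 0 <= a by rewrite mulr_ge0 ?powR_ge0 // ltW.
have q0 : 0 < q.
  have : 0 < t1 * q by apply: le_lt_trans hc.
  by rewrite pmulr_rgt0.
pose t1' := (t1 + a / q) / 2.
have aq : a / q < t1 by rewrite ltr_pdivrMr.
have t1't1 : t1' < t1 by rewrite /t1'; lra.
have at1' : a < t1' * q.
  rewrite /t1' mulrAC mulrDl divfK ?gt_eqF //; lra.
have t1'0 : 0 < t1'.
  have : 0 < t1' * q by apply: le_lt_trans at1'.
  by rewrite pmulr_lgt0.
pose dl := t1 - t1'.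
have dl0 : 0 < dl by rewrite /dl subr_gt0.
have xR : `|x| <= Rb.
  by have := Hr x sigma 0 xr Ss ltac:(by rewrite lexx ltW); rewrite phi0.
have P : forall k : nat, forall t, 0 <= t <= t1 + k%:R * dl -> `|phi t x sigma| <= Rb.
  elim=> [|k IH] t /andP[t0 tk].
    by apply: Hr => //; rewrite t0 /=; rewrite mul0r addr0 in tk.
  set b0 := t1 + k%:R * dl in IH.
  have a00 : t1 <= b0 by rewrite /b0 lerDl mulr_ge0 // ltW.
  have tk' : t <= b0 + dl by move: tk; rewrite -[k.+1%:R]natr1 mulrDl mul1r addrA.
  clearbody b0; clear tk.
  have hA : 0 <= b0 - t1' by rewrite subr_ge0; lra.
  have hB : b0 - t1' <= b0 by rewrite lerBlDr lerDl; lra.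
  have hC : 0 <= rho by apply: le_trans xr.
  have hD : c * `|x| `^ p < (b0 - (b0 - t1')) * rho `^ p by rewrite opprB addrC subrK.
  have [s /andP[s1 s2] hs] := @hit R X Q S phi (@cball R X Rb) V p c x sigma (b0 - t1') b0 rho
     sS fS lH Ss xR hA hB hC (fun t ht => IH t ht) hD.
  case: (Order.TotalTheory.leP t b0) => ta.
    by apply: IH; rewrite t0 ta.
  have s0 : 0 <= s by lra.
  have -> : phi t x sigma = phi (t - s) (phi s x sigma) (tshift s sigma).
    by rewrite semi // ?subr_ge0 ?(ltW (le_lt_trans s2 ta)) // addrC subrK.
  apply: Hr => //; first exact: shift.
  apply/andP; split; first by rewrite subr_ge0; lra.
  rewrite /dl in tk'; lra.
move=> t t0.
apply: (P (Num.Def.trunc (t / dl)).+1).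
rewrite t0 /=.
have h := truncnS_gt (t / dl); rewrite ltr_pdivrMr // in h.
move: h; move: ((Num.Def.trunc (t / dl)).+1%:R * dl) => K h; lra.
Qed.

Lemma partII (R : realType) (X : normedModType R) (Q : Type)
    (S : set (R -> Q)) (phi : R -> X -> (R -> Q) -> X)
    (t1 G0 : R) (beta : R -> R) :
  signal_set S -> fwd_complete S phi ->
  0 < t1 -> 0 < G0 -> classKinf beta ->
  (limsup_0right (fun r => (beta r / r)%R) < +oo)%E ->
  (forall t x sigma, 0 <= t <= t1 -> S sigma ->
     `|phi t x sigma| <= G0 * beta `|x|) ->
   (exists (V : R -> X -> R) (p c : R -> R),
      (forall r, 0 < r -> lyap_hyp S phi (@cball R X r) (V r) (p r) (c r)) /\
      limsup_pinfty (fun r => (Kinv beta (r / G0) *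
                              Num.min 1 ((t1 / c r) `^ (p r)^-1))%R) = +oo%E) ->
     USGES S phi.
Proof.
move=> sS fS t10 G00 bK blim hb [V [p [c [lHall hlim]]]].
have hI : exists r (V' : X -> R) p' c', 0 < r /\ lyap_hyp S phi (@cball R X r) V' p' c'.
  by exists 1, (V 1), (p 1), (c 1); split => //; apply: lHall.
have [r0 [M0 [l0 [r00 M00 l00 hU]]]] := @partI R X Q S phi t1 G0 beta sS fS t10 G00 bK blim hb hI.
move=> r rpos.
move: hlim; rewrite /limsup_pinfty => /ereal_inf_pinfty H.
have H0 := H _ (imageP _ (I : [set: R] 0)).
have hsup := H0; rewrite /= in hsup.
have hsup' : (r%:E < +oo)%E by rewrite ltry.
rewrite -hsup in hsup'.
have [yy [Rb [_ Rb0] <-]] := ereal_sup_gt hsup'.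
rewrite lte_fin => hR.
pose rho := Kinv beta (Rb / G0).
have [rho0 brho] : 0 <= rho /\ beta rho = Rb / G0.
  case: (pselect (exists z, 0 <= z /\ beta z = Rb / G0)) => [hex|hno].
    exact: (xgetPex 0 hex).
  exfalso; move: hR; rewrite /Kinv xgetPN; last by move=> z hz; apply: hno; exists z.
  rewrite mul0r; lra.
rewrite -/rho in hR.
have lH := lHall Rb Rb0.
have [p0 c0 _ _ _] := lH.
set P := p Rb in lH p0 hR *.
set C := c Rb in lH c0 hR *.
set q := (t1 / C) `^ P^-1 in hR.
have q0 : 0 <= q by apply: powR_ge0.
have hr1 : r < rho.
  apply: lt_le_trans hR _; rewrite -[X in _ <= X]mulr1; apply: ler_wpM2l => //.
  by rewrite ge_min lexx.
have hr2 : r < rho * q.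
  apply: lt_le_trans hR _; apply: ler_wpM2l => //; by rewrite ge_min lexx orbT.
have [_ bincr _ _] := bK.
have Hr : forall y sigma u, `|y| <= rho -> S sigma -> 0 <= u <= t1 ->
    `|phi u y sigma| <= Rb.
  move=> y sigma u yr Ss uu.
  apply: le_trans (hb u y sigma uu Ss) _.
  have : beta `|y| <= beta rho.
    move: yr; rewrite le_eqVlt => /orP[/eqP ->//|yr].
    by apply: ltW; apply: bincr.
  move=> h; apply: le_trans (ler_wpM2l (ltW G00) h) _.
  by rewrite brho mulrC divfK // gt_eqF.
have qP : q `^ P = t1 / C.
  by rewrite /q -powRrM mulVf ?gt_eqF // powRr1 // divr_ge0 // ltW.
have hstay : forall x sigma, `|x| <= r -> S sigma -> forall t, 0 <= t ->
    `|phi t x sigma| <= Rb.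
  move=> x sigma xr Ss.
  apply: (@stay R X Q S phi (V Rb) P C t1 Rb rho sS fS lH t10 Hr x sigma) => //.
    by apply: le_trans (ltW hr1).
  have h1 : `|x| `^ P < (rho * q) `^ P.
    apply: gt0_ltr_powR => //; rewrite ?nnegrE ?mulr_ge0 //.
    exact: le_lt_trans hr2.
  rewrite powRM // qP in h1.
  have -> : t1 * rho `^ P = C * (rho `^ P * (t1 / C)).
    by rewrite mulrCA [C * _]mulrCA mulfV ?gt_eqF // mulr1 mulrC.
  by rewrite ltr_pM2l.
have r0P : 0 < r0 `^ P by apply: powR_gt0.
pose T := C * r `^ P / r0 `^ P + 1.
have T0 : 0 <= T.
  rewrite /T; apply: addr_ge0 => //; apply: divr_ge0; last exact: powR_ge0.
  by apply: mulr_ge0; [exact: ltW | exact: powR_ge0].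
have TP : T * r0 `^ P = C * r `^ P + r0 `^ P.
  by rewrite /T mulrDl divfK ?gt_eqF // mul1r.
pose Mx := Num.max M0 (Rb / r0).
have Mx0 : 0 < Mx by rewrite lt_max M00.
have eT : 1 <= expR (l0 * T).
  apply: le_trans (expR_ge1Dx _); rewrite lerDl; apply: mulr_ge0 => //; exact: ltW.
exists (Mx * expR (l0 * T)); exists l0; split => //.
  by rewrite mulr_gt0 // expR_gt0.
move=> t x sigma t0 xr Ss.
have xn : 0 <= `|x| by [].
have et0 : 0 < expR (- (l0 * t)) by apply: expR_gt0.
case: (Order.TotalTheory.leP `|x| r0) => hx.
  apply: le_trans (hU t x sigma t0 hx Ss) _.
  apply: ler_wpM2r => //; apply: ler_wpM2r; first exact: ltW.
  apply: le_trans (_ : Mx <= _); first by rewrite le_max lexx.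
  by rewrite ler_peMr // ltW.
have [phi0 _ _ semi] := fS.
have [_ shift _] := sS.
have xR : @cball R X Rb x by have := hstay x sigma xr Ss 0 (lexx 0); rewrite phi0.
have hcond : C * `|x| `^ P < (T - 0) * r0 `^ P.
  rewrite subr0 TP.
  have : `|x| `^ P <= r `^ P.
    by apply: ge0_ler_powR; rewrite ?nnegrE // ltW.
  move=> h; have := ler_wpM2l (ltW c0) h; rewrite -/C => h'.
  by apply: le_lt_trans h' _; rewrite ltrDl.
have [s /andP[s0 sT] hs] := @hit R X Q S phi (@cball R X Rb) (V Rb) P C x sigma 0 T r0
  sS fS lH Ss xR (lexx 0) T0 (ltW r00) (fun t ht => hstay x sigma xr Ss t ltac:(by case/andP: ht)) hcond.
case: (Order.TotalTheory.leP s t) => st.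
  have -> : phi t x sigma = phi (t - s) (phi s x sigma) (tshift s sigma).
    by rewrite semi // ?subr_ge0 // addrC subrK.
  have := hU (t - s) (phi s x sigma) (tshift s sigma) ltac:(by rewrite subr_ge0) hs (shift _ _ Ss s0).
  move=> h; apply: le_trans h _.
  have E1 : expR (- (l0 * (t - s))) <= expR (l0 * T) * expR (- (l0 * t)).
    rewrite -expRD ler_expR; rewrite mulrBr; move: (l0 * t) => u.
    have : l0 * s <= l0 * T by apply: ler_wpM2l => //; exact: ltW.
    lra.
  have := ler_pM (ltW M00) (ltW (expR_gt0 _)) (_ : M0 <= Mx) E1.
  rewrite le_max lexx /= => /(_ isT) h2.
  apply: ler_pM => //.
  - by rewrite mulr_ge0 // ltW // expR_gt0.
  - by rewrite -mulrA.
  - by apply: le_trans hs (ltW hx).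
have := hstay x sigma xr Ss t t0 => h.
apply: le_trans h _.
have e1 : 1 <= expR (l0 * T) * expR (- (l0 * t)).
  rewrite -expRD; apply: le_trans (expR_ge1Dx _); rewrite lerDl subr_ge0.
  apply: ler_wpM2l; [exact: ltW | lra].
have h1 : Rb <= Rb / r0 * `|x|.
  rewrite mulrAC ler_pdivlMr // ler_wpM2l //; last exact: ltW.
  by apply: le_trans (xR) ; rewrite /cball /=.
apply: le_trans h1 _.
apply: ler_wpM2r => //.
rewrite -mulrA; apply: le_trans (_ : Mx <= _); first by rewrite le_max lexx orbT.
by rewrite ler_peMr // ltW.
Qed.

Theorem theorem4 (R : realType) (X : completeNormedModType R) (Q : Type)
    (S : set (R -> Q)) (phi : R -> X -> (R -> Q) -> X)
    (t1 G0 : R) (beta : R -> R) :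
  signal_set S -> fwd_complete S phi ->
  0 < t1 -> 0 < G0 -> classKinf beta ->
  (limsup_0right (fun r => (beta r / r)%R) < +oo)%E ->
  (forall t x sigma, 0 <= t <= t1 -> S sigma ->
     `|phi t x sigma| <= G0 * beta `|x|) ->
  [/\
   (* (i) *)
   (exists r (V : X -> R) p c, 0 < r /\ lyap_hyp S phi (@cball R X r) V p c) ->
     ULES S phi,
   (* (ii) *)
   (exists (V : R -> X -> R) (p c : R -> R),
      (forall r, 0 < r -> lyap_hyp S phi (@cball R X r) (V r) (p r) (c r)) /\
      limsup_pinfty (fun r => (Kinv beta (r / G0) *
                              Num.min 1 ((t1 / c r) `^ (p r)^-1))%R) = +oo%E) ->
     USGES S phi &
   (* (iii) *)
   (forall r, 0 <= r -> beta r = r) ->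
   (exists (V : X -> R) p c, lyap_hyp S phi [set: X] V p c) ->
     UGES S phi].
Proof.
move=> sS fS t10 G00 bK blim hb; split.
- exact: (@partI R X Q S phi t1 G0 beta sS fS t10 G00 bK blim hb).
- exact: (@partII R X Q S phi t1 G0 beta sS fS t10 G00 bK blim hb).
- move=> bid; exact: (@partIII R X Q S phi t1 G0 beta sS fS t10 G00 hb bid).
Qed.
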